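(* Let $\mathcal{C}$ be a class of finite graphs for which there is a natural number $N$ such that every set of pairwise disjoint edges (edges $\{a_i,b_i\}$, $i=1,\dots,k$, with all $a_1,\dots,a_k,b_1,\dots,b_k$ distinct) in every member of $\mathcal{C}$ has size at most $N$. Then $\mathcal{C}$ is well quasi-ordered under both the standard and the strong homomorphic image orderings.
   Context: A graph is a set with a symmetric binary edge relation. A homomorphism maps edges to edges; it is strong if additionally every edge of the target among vertices of the image is the image of an edge. Standard homomorphic image ordering: $A\preceq B$ iff there is a surjective homomorphism $B\to A$; strong: iff there is a surjective strong homomorphism $B\to A$. Well quasi-ordered means no infinite strictly decreasing sequence and no infinite antichain; structures considered up to isomorphism. *)

(* Defs.v *)
From mathcomp Require Import all_boot.
Set Implicit Arguments. Unset Strict Implicit. Unset Printing Implicit Defensive.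

(* A finite graph: a finite vertex set with a symmetric (boolean) edge
   relation.  Loops are allowed, as in the paper ("a set with a symmetric
   binary edge relation"). *)
Record fgr := FGr {
  vert :> finType;
  edge : rel vert;
  edge_sym : symmetric edge
}.

Definition is_hom (G H : fgr) (f : G -> H) : Prop :=
  forall x y : G, edge x y -> edge (f x) (f y).

Definition is_strong_hom (G H : fgr) (f : G -> H) : Prop :=
  is_hom f /\
  forall u v : H, (exists x, f x = u) -> (exists y, f y = v) -> edge u v ->
    exists x y : G, [/\ f x = u, f y = v & edge x y].

Definition surj (A B : Type) (f : A -> B) : Prop := forall b, exists a, f a = b.

Definition hom_le (A B : fgr) : Prop :=
  exists f : B -> A, is_hom f /\ surj f.

Definition strong_hom_le (A B : fgr) : Prop :=
  exists f : B -> A, is_strong_hom f /\ surj f.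

Definition disjoint_edges (G : fgr) (k : nat) (a b : 'I_k -> G) : Prop :=
  (forall i, edge (a i) (b i)) /\
  injective (fun i : 'I_k + 'I_k => match i with inl j => a j | inr j => b j end).

Definition wqo_on (C : fgr -> Prop) (le : fgr -> fgr -> Prop) : Prop :=
  (~ exists g : nat -> fgr, (forall n, C (g n)) /\
       forall n, le (g n.+1) (g n) /\ ~ le (g n) (g n.+1)) /\
  (~ exists g : nat -> fgr, (forall n, C (g n)) /\
       forall i j, i <> j -> ~ le (g i) (g j)).

(* Main.v *)
Require Import Defs.
From mathcomp Require Import all_boot.
From mathcomp Require Import zify.
From Stdlib Require Import Classical ClassicalEpsilon.
Set Implicit Arguments. Unset Strict Implicit. Unset Printing Implicit Defensive.

Lemma min_after (f : nat -> nat) (a : nat) :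
  exists n, a < n /\ forall k, a < k -> f n <= f k.
Proof.
suff H : forall v n, a < n -> f n <= v -> exists m, a < m /\ forall k, a < k -> f m <= f k.
  exact: (H (f a.+1) a.+1).
elim/ltn_ind => v IH n an fnv.
case: (classic (exists k, a < k /\ f k < f n)) => [[k [ak fk]]|nok].
  exact: (IH (f k) (leq_trans fk fnv) k ak).
exists n; split=> // k ak; rewrite leqNgt; apply/negP => fk; apply: nok; by exists k.
Qed.

Lemma mono_sub (f : nat -> nat) : exists t : nat -> nat,
  (forall n, t n < t n.+1) /\ forall n, f (t n) <= f (t n.+1).
Proof.
pose nx a := proj1_sig (constructive_indefinite_description _ (min_after f a)).
have nxP a : a < nx a /\ forall k, a < k -> f (nx a) <= f k.
  exact: (proj2_sig (constructive_indefinite_description _ (min_after f a))).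
exists (fun n => iter n.+1 nx 0); split=> n /=.
  by case: (nxP (nx (iter n nx 0))).
case: (nxP (iter n nx 0)) => h1 h2; apply: h2.
case: (nxP (nx (iter n nx 0))) => h3 _; exact: ltn_trans h3.
Qed.

Lemma mono_sub_seq (I : eqType) (x : nat -> I -> nat) (cs : seq I) :
  exists s : nat -> nat, (forall n, s n < s n.+1) /\
    forall c, c \in cs -> forall i j, i <= j -> x (s i) c <= x (s j) c.
Proof.
elim: cs => [|c cs [s [sinc sP]]]; first by exists id.
have [t [tinc tP]] := mono_sub (fun n => x (s n) c).
have tmono : {homo t : i j / i <= j >-> i <= j}.
  by apply: homo_leq => //; [move=> ? ? ?; apply: leq_trans | move=> i; apply: ltnW].
exists (fun n => s (t n)); split.
  have sh : {homo s : i j / i < j >-> i < j}.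
    by apply: homo_ltn => // y0 x0 z0; apply: ltn_trans.
  by move=> n; apply: sh.
move=> c'; rewrite inE => /orP [/eqP -> | cin] i j ij.
  have h : {homo (fun n => x (s (t n)) c) : i j / i <= j >-> i <= j}.
    by apply: homo_leq => // ? ? ?; apply: leq_trans.
  exact: h.
by apply: sP => //; apply: tmono.
Qed.

Lemma dickson (I : finType) (x : nat -> I -> nat) :
  exists i j, i < j /\ forall c, x i c <= x j c.
Proof.
have [s [sinc sP]] := mono_sub_seq x (enum I).
exists (s 0), (s 1); split => // c; apply: sP => //; by rewrite mem_enum.
Qed.

Lemma no_desc (v e : nat -> nat) : (forall n, e n <= v n * v n) ->
  (forall n, v n.+1 < v n \/ (v n.+1 = v n /\ e n < e n.+1)) -> False.
Proof.
move=> eb st.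
pose phi n := v n * (v n * v n).+1 - e n.
have ph n : phi n.+1 < phi n.
  rewrite /phi; have := eb n; have := eb n.+1.
  case: (st n) => [lt | [eq lt]]; last by rewrite eq; nia.
  move: lt; set a := v n.+1; set b := v n; move=> lt h1 h2.
  have : a * (a * a).+1 <= b.-1 * (b.-1 * b.-1).+1.
    have ab : a <= b.-1 by lia.
    by apply: leq_mul => //; rewrite ltnS; apply: leq_mul.
  case: b lt h2 => [|w] //= _ h2 h3; nia.
have : forall n, phi n + n <= phi 0.
  elim=> [|n IH]; first by rewrite addn0.
  by rewrite addnS; apply: leq_trans IH; rewrite ltn_add2r.
by move=> /(_ (phi 0).+1); lia.
Qed.
Definition ecount (G : fgr) := #|[set p : G * G | edge p.1 p.2]|.

Lemma ecount_le (G : fgr) : ecount G <= #|G| * #|G|.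
Proof. by rewrite /ecount -card_prod; apply: max_card. Qed.

Lemma strong_to_hom (A B : fgr) : strong_hom_le A B -> hom_le A B.
Proof. by case=> f [[fh _] fs]; exists f. Qed.

Lemma dec_step (A B : fgr) : hom_le B A ->
  #|B| < #|A| \/ (#|B| = #|A| /\ ecount A < ecount B) \/ strong_hom_le A B.
Proof.
case=> f [fh fs].
have imT : f @: setT = setT :> {set B}.
  apply/setP => b; rewrite inE; case: (fs b) => a <-; by rewrite imset_f ?inE.
have cB : #|B| <= #|A| by rewrite -cardsT -imT -[#|A|]cardsT leq_imset_card.
case: (ltngtP #|B| #|A|) => [lt|gt|eq]; [by left | by move: (leq_ltn_trans cB gt); rewrite ltnn| right].
have finj : injective f.
  have /imset_injP fi : #|f @: setT| == #|[set: A]| by rewrite imT !cardsT eq.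
  by move=> x y; apply: fi; rewrite inE.
pose g (p : A * A) := (f p.1, f p.2).
have ginj : injective g by move=> [x1 x2] [y1 y2] [/finj -> /finj ->].
set EA := [set p : A * A | edge p.1 p.2]; set EB := [set p : B * B | edge p.1 p.2].
have sub : g @: EA \subset EB.
  apply/subsetP => q /imsetP [p]; rewrite inE => ep ->; rewrite inE; exact: fh.
have le : ecount A <= ecount B.
  by rewrite /ecount -/EA -/EB -(card_imset _ ginj); apply: subset_leq_card.
case: (ltngtP (ecount A) (ecount B)) => [lt|gt|eqE]; [by left | by move: (leq_ltn_trans le gt); rewrite ltnn | right].
have eqS : g @: EA = EB.
  by apply/eqP; rewrite eqEcard sub /= card_imset //; move: eqE; rewrite /ecount -/EA -/EB => ->.
have [h fK hK] : bijective f by apply: inj_card_bij => //; rewrite eq.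
exists h; split; [split|].
- move=> u v euv; have : (u, v) \in EB by rewrite inE.
  rewrite -eqS => /imsetP [[x y]]; rewrite inE /= => exy [-> ->]; by rewrite !fK.
- move=> u v _ _ euv; exists (f u), (f v); rewrite !fK; split=> //; exact: fh.
- move=> b; exists (f b); exact: fK.
Qed.
Section Matching.
Variable G : fgr.

Definition matching (P : {set G * G}) : bool :=
  [forall p in P, edge p.1 p.2 && (p.1 != p.2)] &&
  [forall p in P, forall q in P, (p != q) ==>
     [&& p.1 != q.1, p.1 != q.2, p.2 != q.1 & p.2 != q.2]].

Lemma matching0 : matching set0.
Proof. by apply/andP; split; apply/forall_inP => p; rewrite inE. Qed.

Definition Pm := [arg max_(P > set0 | matching P) #|P|].
Definition cov : {set G} := [set p.1 | p in Pm] :|: [set p.2 | p in Pm].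
Definition sq := enum cov.

Lemma PmP : matching Pm /\ forall P, matching P -> #|P| <= #|Pm|.
Proof. rewrite /Pm; case: arg_maxnP => [|P mP mx]; first exact: matching0. by split. Qed.

Lemma cov_edge u v : edge u v -> u != v -> (u \in cov) || (v \in cov).
Proof.
move=> euv nuv; apply/negPn/negP; rewrite negb_or => /andP [nu nv].
case: PmP => mP mx.
have inc1 p : p \in Pm -> p.1 \in cov.
  by move=> pin; rewrite inE; apply/orP; left; apply/imsetP; exists p.
have inc2 p : p \in Pm -> p.2 \in cov.
  by move=> pin; rewrite inE; apply/orP; right; apply/imsetP; exists p.
have ne x y : x \in cov -> y \notin cov -> y != x.
  by move=> xc yc; apply/eqP => e; move: yc; rewrite e xc.
have ne' x y : x \in cov -> y \notin cov -> x != y.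
  by move=> xc yc; rewrite eq_sym; apply: ne.
have nin : (u, v) \notin Pm by apply: contra nu => /inc1.
move: mP => /andP [/forall_inP m1 /forall_inP m2].
have mP' : matching ((u, v) |: Pm).
  apply/andP; split.
    apply/forall_inP => p; rewrite in_setU1 => /orP [/eqP -> | pin]; first by rewrite /= euv nuv.
    exact: m1.
  apply/forall_inP => p pin; apply/forall_inP => q qin; apply/implyP => npq.
  move: pin qin; rewrite !in_setU1 => /orP [/eqP ep| pin] /orP [/eqP eq| qin].
  - by rewrite ep eq eqxx in npq.
  - by rewrite ep /=; apply/and4P; split; apply: ne => //; by [apply: inc1 | apply: inc2].
  - by rewrite eq /=; apply/and4P; split; apply: ne' => //; by [apply: inc1 | apply: inc2].
  - by move/forall_inP: (m2 p pin) => /(_ q qin) /implyP; apply.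
have := mx _ mP'; rewrite cardsU1 nin /=; lia.
Qed.

Lemma matching_disj (P : {set G * G}) : matching P ->
  disjoint_edges (fun i : 'I_#|P| => (enum_val i).1) (fun i => (enum_val i).2).
Proof.
case/andP => /forall_inP m1 /forall_inP m2; split.
  by move=> i; case/andP: (m1 _ (enum_valP i)).
have key (i j : 'I_#|P|) : enum_val i != enum_val j ->
   [&& (enum_val i).1 != (enum_val j).1, (enum_val i).1 != (enum_val j).2,
       (enum_val i).2 != (enum_val j).1 & (enum_val i).2 != (enum_val j).2].
  move=> nij; move/forall_inP: (m2 _ (enum_valP i)) => /(_ _ (enum_valP j)) /implyP; exact.
have nl (i : 'I_#|P|) : (enum_val i).1 != (enum_val i).2.
  by case/andP: (m1 _ (enum_valP i)).
move=> [i|i] [j|j] /= e; case: (eqVneq (enum_val i) (enum_val j)) => [eij|nij];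
  try by move: (key _ _ nij); rewrite e eqxx /= ?andbF.
- by rewrite (enum_val_inj eij).
- by move: (nl i); rewrite e eij eqxx.
- by move: (nl i); rewrite e eij eqxx.
- by rewrite (enum_val_inj eij).
Qed.


Lemma cov_card : #|cov| <= #|Pm| + #|Pm|.
Proof.
rewrite /cov cardsU; apply: leq_trans (leq_subr _ _) _.
by apply: leq_add; apply: leq_imset_card.
Qed.

End Matching.

Lemma Pm_le (N : nat) (G : fgr) :
  (forall (k : nat) (a b : 'I_k -> G), disjoint_edges a b -> k <= N) -> #|Pm G| <= N.
Proof. move=> h; case: (PmP G) => mP _; exact: (h _ _ _ (matching_disj mP)). Qed.

Definition ty (G : fgr) (v : G) : bool * seq bool :=
  (edge v v, [seq edge v y | y <- sq G]).
Definition cls (G : fgr) (t : bool * seq bool) : {set G} :=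
  [set v | (v \notin cov G) && (ty v == t)].
Definition adjb (G : fgr) (l1 l2 : nat) : bool :=
  nth false (nth [::] [seq (ty x).2 | x <- sq G] l1) l2.
Definition tpseq (K : nat) (G : fgr) (tp : bool * {ffun 'I_K.+1 -> bool}) :=
  (tp.1, mkseq (fun i => tp.2 (inord i)) (size (sq G))).
Definition tp_of (K : nat) (t : bool * seq bool) : bool * {ffun 'I_K.+1 -> bool} :=
  (t.1, [ffun i : 'I_K.+1 => nth false t.2 i]).
Definition Comp K := (('I_K.+1 * 'I_K.+1) + (bool * {ffun 'I_K.+1 -> bool}) + unit)%type.
Definition cval K (G : fgr) (c : Comp K) : nat :=
  match c with
  | inl (inl (i, j)) => adjb G i j
  | inl (inr tp) => #|cls G (tpseq G tp)|
  | inr _ => size (sq G)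
  end.
Definition aval K (G : fgr) (c : Comp K) : nat :=
  match c with
  | inl (inl (i, j)) => 1 - adjb G i j
  | inl (inr tp) => (#|cls G (tpseq G tp)| == 0)
  | inr _ => K.+1 - size (sq G)
  end.
Definition vec K (G : fgr) (c : Comp K * bool) : nat :=
  if c.2 then aval G c.1 else cval G c.1.

Lemma size_ty (G : fgr) (v : G) : size (ty v).2 = size (sq G).
Proof. by rewrite size_map. Qed.

Lemma tpseqK K (G : fgr) (t : bool * seq bool) :
  size t.2 = size (sq G) -> size (sq G) <= K -> tpseq G (tp_of K t) = t.
Proof.
case: t => b s /= e le; rewrite /tpseq /=; congr pair.
apply/(@eq_from_nth _ false); rewrite size_mkseq // => i lt.
by rewrite nth_mkseq // ffunE inordK //; lia.
Qed.

Lemma edge_nth (G : fgr) (v : G) l d :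
  l < size (sq G) -> edge v (nth d (sq G) l) = nth false (ty v).2 l.
Proof. by move=> lt; rewrite /ty /= (nth_map d). Qed.

Lemma adjbE (G : fgr) l1 l2 d : l1 < size (sq G) -> l2 < size (sq G) ->
  adjb G l1 l2 = edge (nth d (sq G) l1) (nth d (sq G) l2).
Proof. by move=> h1 h2; rewrite /adjb (nth_map d) // edge_nth. Qed.

Lemma memsq (G : fgr) (v : G) : (v \in sq G) = (v \in cov G).
Proof. by rewrite mem_enum. Qed.

Lemma main_emb K (G H : fgr) : size (sq G) <= K -> size (sq H) <= K ->
  (forall c, @vec K G c <= @vec K H c) -> strong_hom_le G H.
Proof.
move=> bG bH le.
have E1 : size (sq G) = size (sq H).
  have := le (inr tt, false); have := le (inr tt, true); rewrite /vec /=; lia.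
have E2 l1 l2 : l1 < size (sq G) -> l2 < size (sq G) -> adjb G l1 l2 = adjb H l1 l2.
  move=> h1 h2.
  have := le (inl (inl (inord l1, inord l2)), false).
  have := le (inl (inl (inord l1, inord l2)), true); rewrite /vec /= !inordK; try lia.
have E3' (t : bool * seq bool) : size t.2 = size (sq G) ->
   #|cls G t| <= #|cls H t| /\ (0 < #|cls H t| -> 0 < #|cls G t|).
  move=> st; have := le (inl (inr (tp_of K t)), false).
  have := le (inl (inr (tp_of K t)), true); rewrite /vec /=.
  rewrite !tpseqK -?E1 //; lia.
have E3 (h : H) : h \notin cov H ->
   0 < #|cls G (ty h)| /\ #|cls G (ty h)| <= #|cls H (ty h)|.
  move=> hn; have hin : h \in cls H (ty h) by rewrite inE hn eqxx.
  have : 0 < #|cls H (ty h)| by apply/card_gt0P; exists h.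
  case: (E3' (ty h)); rewrite ?size_ty -?E1 //; lia.
have Hinh : forall h : H, exists u : G, True.
  move=> h; case: (boolP (h \in cov H)) => hc.
    have hs : h \in sq H by rewrite memsq.
    move: E1; case: (sq G) => [|u t'] /=; last by exists u.
    by case: (sq H) hs => [|x s].
  by case: (E3 h hc) => /card_gt0P [u _] _; exists u.
case: (pickP (@predT G)) => [d _ | G0]; last first.
  have H0 : H -> False by move=> h; case: (Hinh h) => u _; have := G0 u.
  exists (fun h => match H0 h with end); split; [split|].
  - by move=> x; case: (H0 x).
  - by move=> u v [x _]; case: (H0 x).
  - by move=> b; have := G0 b.
pose f (h : H) : G := if h \in cov H then nth d (sq G) (index h (sq H))
   else nth d (enum (cls G (ty h)))
          (index h (enum (cls H (ty h))) %% size (enum (cls G (ty h)))).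
have fc h : h \in cov H -> f h = nth d (sq G) (index h (sq H)) by move=> hc; rewrite /f hc.
have F1 h : h \in cov H -> f h \in cov G.
  move=> hc; rewrite (fc _ hc) -memsq mem_nth // E1 index_mem memsq //.
have F2 h : h \notin cov H -> f h \in cls G (ty h).
  move=> hc; rewrite /f (negbTE hc) -mem_enum; apply: mem_nth.
  case: (E3 h hc) => p _; apply: ltn_pmod; by rewrite -cardE.
have fn h : h \notin cov H -> f h \notin cov G.
  by move=> hc; move: (F2 h hc); rewrite inE => /andP [].
have fty h : h \notin cov H -> ty (f h) = ty h.
  by move=> hc; move: (F2 h hc); rewrite inE => /andP [_ /eqP].
have EQ1 h1 h2 : h1 \in cov H -> edge (f h1) (f h2) = edge h1 h2.
  move=> c1; have l1 : index h1 (sq H) < size (sq G) by rewrite E1 index_mem memsq.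
  rewrite (fc _ c1) edge_sym; case: (boolP (h2 \in cov H)) => c2.
    have l2 : index h2 (sq H) < size (sq G) by rewrite E1 index_mem memsq.
    rewrite (fc _ c2) -adjbE // E2 // (adjbE h1) -?E1 // !nth_index ?memsq //.
    exact: edge_sym.
  rewrite edge_nth // (fty _ c2) -(@edge_nth H h2 _ h1) -?E1 // nth_index ?memsq //.
  exact: edge_sym.
have LOOP h : edge (f h) (f h) = edge h h.
  case: (boolP (h \in cov H)) => hc; first exact: EQ1.
  exact: (congr1 fst (fty _ hc)).
have fs : surj f.
  move=> u; case: (boolP (u \in cov G)) => uc.
    have lt : index u (sq G) < size (sq H) by rewrite -E1 index_mem memsq.
    have [h0 _] : exists h0 : H, True by move: lt; case: (sq H) => [|x s] //; exists x.
    set h := nth h0 (sq H) (index u (sq G)).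
    have hc : h \in cov H by rewrite -memsq mem_nth.
    exists h; rewrite (fc _ hc) index_uniq ?enum_uniq // nth_index // memsq //.
  set t := ty u.
  have uB : u \in cls G t by rewrite inE uc eqxx.
  case: (E3' t); first by rewrite size_ty.
  move=> cle _.
  have rB : index u (enum (cls G t)) < #|cls G t| by rewrite cardE index_mem mem_enum.
  have rA : index u (enum (cls G t)) < #|cls H t| by apply: leq_trans rB cle.
  have [h0 _] : exists h0 : H, h0 \in cls H t.
    by apply/card_gt0P; apply: leq_ltn_trans rA.
  set h := nth h0 (enum (cls H t)) (index u (enum (cls G t))).
  have hA : h \in cls H t by rewrite -mem_enum mem_nth // -cardE.
  move: (hA); rewrite inE => /andP [hc /eqP tyh].
  exists h; rewrite /f (negbTE hc) tyh index_uniq ?enum_uniq -?cardE //.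
  by rewrite modn_small -?cardE // nth_index ?mem_enum.
exists f; split; [split|] => //.
- move=> h1 h2 e; case: (boolP (h1 \in cov H)) => c1; first by rewrite EQ1.
  case: (boolP (h2 \in cov H)) => c2; first by rewrite edge_sym EQ1 // edge_sym.
  case: (eqVneq h1 h2) e => [<- e|ne e]; first by rewrite LOOP.
  by move: (cov_edge e ne); rewrite (negbTE c1) (negbTE c2).
- move=> u v [x <-] [y <-] e.
  case: (boolP (x \in cov H)) => c1; first by exists x, y; split => //; rewrite -EQ1.
  case: (boolP (y \in cov H)) => c2.
    by exists x, y; split => //; rewrite edge_sym -EQ1 // edge_sym.
  case: (eqVneq (f x) (f y)) => [exy|ne].
    by exists x, x; split => //; rewrite -LOOP {2}exy.
  by move: (cov_edge e ne); rewrite (negbTE (fn _ c1)) (negbTE (fn _ c2)).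
Qed.

Lemma good_pair (C : fgr -> Prop) (N : nat) :
  (forall G : fgr, C G ->
     forall (k : nat) (a b : 'I_k -> G), disjoint_edges a b -> k <= N) ->
  forall g : nat -> fgr, (forall n, C (g n)) ->
  exists i j, i < j /\ strong_hom_le (g i) (g j).
Proof.
move=> hC g gC.
have bd n : size (sq (g n)) <= N.*2.
  rewrite /sq -cardE -addnn; apply: leq_trans (cov_card _) _.
  by have := Pm_le (hC _ (gC n)); lia.
have [i [j [ij le]]] := dickson (fun n => @vec N.*2 (g n)).
by exists i, j; split => //; apply: main_emb (bd i) (bd j) le.
Qed.

Lemma no_desc_gen (C : fgr -> Prop) (le : fgr -> fgr -> Prop) :
  (forall A B, le A B -> hom_le A B) -> (forall A B, strong_hom_le A B -> le A B) ->
  ~ exists g : nat -> fgr, (forall n, C (g n)) /\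
       forall n, le (g n.+1) (g n) /\ ~ le (g n) (g n.+1).
Proof.
move=> h1 h2 [g [_ gP]].
apply: (@no_desc (fun n => #|g n|) (fun n => ecount (g n))) => [n|n]; first exact: ecount_le.
case: (gP n) => /h1 /dec_step [lt|[[e1 e2]|s]] nle; [by left | by right | by case: nle; apply: h2].
Qed.

Theorem corollary2p9 (C : fgr -> Prop) (N : nat) :
  (forall G : fgr, C G ->
     forall (k : nat) (a b : 'I_k -> G), disjoint_edges a b -> k <= N) ->
  wqo_on C hom_le /\ wqo_on C strong_hom_le.
Proof.
move=> hC; split; split.
- by apply: no_desc_gen => // A B; apply: strong_to_hom.
- move=> [g [gC gA]]; have [i [j [ij s]]] := good_pair hC gC.
  apply: (gA i j); [lia | exact: strong_to_hom].
- by apply: no_desc_gen => // A B; apply: strong_to_hom.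
- move=> [g [gC gA]]; have [i [j [ij s]]] := good_pair hC gC.
  apply: (gA i j); [lia | exact: s].
Qed.
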